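(* Let $(\mathbf f,\mathbf g)$ be a vector admissible system with potential $U$. Let $(\mathbf x,\epsilon)\in\mathcal X\times\mathcal E$ with $\mathbf x\preceq\mathbf f(\mathbf g(\mathbf x);\epsilon)$ or $\mathbf x\succeq\mathbf f(\mathbf g(\mathbf x);\epsilon)$. Then the limit $\mathbf x^\infty(\mathbf x;\epsilon)$ exists and $U(\mathbf x;\epsilon)\ge U(\mathbf x^\infty(\mathbf x;\epsilon);\epsilon)$.
   Context: Let $d\in\mathbb N$, $\mathcal X=[0,1]^d$, $\mathcal E=[0,1]$, $\mathcal X^\circ=\mathcal X\setminus\{\mathbf 0\}$. Vectors are row vectors; $\mathbf x\preceq\mathbf y$ means $x_i\le y_i$ for all $i$. For a vector-valued function $\mathbf h$ of $\mathbf x$, $\mathbf h'(\mathbf x)$ denotes its Jacobian matrix $[\partial h_i/\partial x_j]_{i,j}$; for a scalar function $F(\mathbf x;\epsilon)$, $F'(\mathbf x;\epsilon)$ denotes its gradient in $\mathbf x$ (a row vector). Let $\mathbf D$ be a $d\times d$ diagonal matrix with positive diagonal entries, $\mathbf f:\mathcal X\times\mathcal E\to\mathcal X$, $\mathbf g:\mathcal X\to\mathcal X$, and $F:\mathcal X\times\mathcal E\to\mathbb R$, $G:\mathcal X\to\mathbb R$ functionals with $F'(\mathbf x;\epsilon)=\mathbf f(\mathbf x;\epsilon)\mathbf D$ and $G'(\mathbf x)=\mathbf g(\mathbf x)\mathbf D$, normalized so that $F(\mathbf 0;\epsilon)=G(\mathbf 0)=0$. The pair $(\mathbf f,\mathbf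 g)$ is a vector admissible system if: (i) $\mathbf f,\mathbf g$ are twice continuously differentiable; (ii) $\mathbf f(\mathbf x;\epsilon)$ and $\mathbf g(\mathbf x)$ are non-decreasing in $\mathbf x$ with respect to $\preceq$; (iii) for each $\mathbf x\in\mathcal X^\circ$, $\mathbf f(\mathbf x;\epsilon)$ is strictly increasing in $\epsilon$, i.e. $\epsilon_1<\epsilon_2$ implies $\mathbf f(\mathbf x;\epsilon_1)\preceq\mathbf f(\mathbf x;\epsilon_2)$ and $\mathbf f(\mathbf x;\epsilon_1)\neq\mathbf f(\mathbf x;\epsilon_2)$; (iv) $\mathbf f(\mathbf 0;\epsilon)=\mathbf f(\mathbf x;0)=\mathbf g(\mathbf 0)=\mathbf 0$ and $F(\mathbf x;0)=0$. The associated recursion is $\mathbf x^{(\ell+1)}=\mathbf f(\mathbf g(\mathbf x^{(\ell)});\epsilon)$. The potential function is $U(\mathbf x;\epsilon)=\mathbf g(\mathbf x)\mathbf D\mathbf x^{\mathsf T}-G(\mathbf x)-F(\mathbf g(\mathbf x);\epsilon)$. For $(\mathbf x,\epsilon)\in\mathcal X\times\mathcal E$, let $\mathbf x^{(0)}=\mathbf x$ and run the recursion; $\mathbf x^\infty(\mathbf x;\epsilon)=\lim_{\ell\to\infty}\mathbf x^{(\ell)}$ whenever this limit exists. *)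

(* Defs.v *)
From mathcomp Require Import all_boot.
From Stdlib Require Import Reals.
Set Implicit Arguments. Unset Strict Implicit. Unset Printing Implicit Defensive.
Open Scope R_scope.

Definition vec (d : nat) := 'I_d -> R.

Definition vsum (d : nat) (u : vec d) : R := \big[Rplus/0]_(i < d) u i.
Definition dot (d : nat) (u v : vec d) : R := vsum (fun i => u i * v i).
Definition vsub (d : nat) (u v : vec d) : vec d := fun i => u i - v i.
Definition vzero (d : nat) : vec d := fun _ => 0.
Arguments vzero d : clear implicits.
Definition vnorm (d : nat) (u : vec d) : R := sqrt (dot u u).

Definition inX (d : nat) (x : vec d) : Prop := forall i, 0 <= x i <= 1.
Definition inEps (e : R) : Prop := 0 <= e <= 1.
Definition vle (d : nat) (x y : vec d) : Prop := forall i, x i <= y i.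

Definition dist1 (d : nat) (x y : vec d) : R := vnorm (vsub y x).
Definition dist2 (d : nat) (x : vec d) (e : R) (y : vec d) (e' : R) : R :=
  sqrt (dot (vsub y x) (vsub y x) + (e' - e) * (e' - e)).

Definition has_grad1 (d : nat) (phi : vec d -> R) (gr : vec d -> vec d) : Prop :=
  forall x, inX x -> forall eps, 0 < eps -> exists delta, 0 < delta /\
    forall y, inX y -> dist1 x y < delta ->
      Rabs (phi y - phi x - dot (gr x) (vsub y x)) <= eps * dist1 x y.

Definition cont1 (d : nat) (psi : vec d -> R) : Prop :=
  forall x, inX x -> forall eps, 0 < eps -> exists delta, 0 < delta /\
    forall y, inX y -> dist1 x y < delta -> Rabs (psi y - psi x) < eps.

Definition has_grad2 (d : nat) (phi : vec d -> R -> R)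
    (gx : vec d -> R -> vec d) (ge : vec d -> R -> R) : Prop :=
  forall x e, inX x -> inEps e -> forall eps, 0 < eps -> exists delta, 0 < delta /\
    forall y e', inX y -> inEps e' -> dist2 x e y e' < delta ->
      Rabs (phi y e' - phi x e - (dot (gx x e) (vsub y x) + ge x e * (e' - e)))
        <= eps * dist2 x e y e'.

Definition cont2 (d : nat) (psi : vec d -> R -> R) : Prop :=
  forall x e, inX x -> inEps e -> forall eps, 0 < eps -> exists delta, 0 < delta /\
    forall y e', inX y -> inEps e' -> dist2 x e y e' < delta ->
      Rabs (psi y e' - psi x e) < eps.

Definition C2_1 (d : nat) (h : vec d -> vec d) : Prop :=
  exists J : vec d -> 'I_d -> vec d,
    (forall i, has_grad1 (fun x => h x i) (fun x => J x i)) /\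
    (forall i j, exists H : vec d -> vec d,
        has_grad1 (fun x => J x i j) H /\ forall k, cont1 (fun x => H x k)).

Definition C2_2 (d : nat) (h : vec d -> R -> vec d) : Prop :=
  exists (Jx : vec d -> R -> 'I_d -> vec d) (Je : vec d -> R -> vec d),
    (forall i, has_grad2 (fun x e => h x e i) (fun x e => Jx x e i) (fun x e => Je x e i)) /\
    (forall i j, exists (Hx : vec d -> R -> vec d) (He : vec d -> R -> R),
        has_grad2 (fun x e => Jx x e i j) Hx He /\
        (forall k, cont2 (fun x e => Hx x e k)) /\ cont2 He) /\
    (forall i, exists (Hx : vec d -> R -> vec d) (He : vec d -> R -> R),
        has_grad2 (fun x e => Je x e i) Hx He /\
        (forall k, cont2 (fun x e => Hx x e k)) /\ cont2 He).

(** Vector admissible system (f, g) with diagonal D (diagonal entries Dd) and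
    functionals F, G with F' = f D, G' = g D, F(0;e) = G(0) = 0. *)
Record vector_admissible (d : nat) (Dd : vec d) (f : vec d -> R -> vec d)
    (g : vec d -> vec d) (F : vec d -> R -> R) (G : vec d -> R) : Prop := {
  D_pos : forall i, 0 < Dd i;
  f_maps : forall x e, inX x -> inEps e -> inX (f x e);
  g_maps : forall x, inX x -> inX (g x);
  F_grad : forall e, inEps e -> has_grad1 (fun x => F x e) (fun x i => f x e i * Dd i);
  G_grad : has_grad1 G (fun x i => g x i * Dd i);
  F_zero : forall e, inEps e -> F (vzero d) e = 0;
  G_zero : G (vzero d) = 0;
  f_C2 : C2_2 f;
  g_C2 : C2_1 g;
  f_mono : forall e x y, inEps e -> inX x -> inX y -> vle x y -> vle (f x e) (f y e);
  g_mono : forall x y, inX x -> inX y -> vle x y -> vle (g x) (g y);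
  f_strict : forall x e1 e2, inX x -> x <> vzero d -> inEps e1 -> inEps e2 -> e1 < e2 ->
    vle (f x e1) (f x e2) /\ f x e1 <> f x e2;
  f_0x : forall e, inEps e -> f (vzero d) e = vzero d;
  f_x0 : forall x, inX x -> f x 0 = vzero d;
  g_0 : g (vzero d) = vzero d;
  F_x0 : forall x, inX x -> F x 0 = 0
}.

Definition potential (d : nat) (Dd : vec d) (g : vec d -> vec d)
    (F : vec d -> R -> R) (G : vec d -> R) (x : vec d) (e : R) : R :=
  dot (fun i => g x i * Dd i) x - G x - F (g x) e.

Definition rec_iter (d : nat) (f : vec d -> R -> vec d) (g : vec d -> vec d)
    (e : R) (x : vec d) (l : nat) : vec d :=
  iter l (fun y => f (g y) e) x.

Definition vlim (d : nat) (s : nat -> vec d) (l : vec d) : Prop :=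
  forall i, Un_cv (fun n => s n i) (l i).

(* Main.v *)
Require Import Defs.
From mathcomp Require Import all_boot.
From Stdlib Require Import Reals Lra Psatz.
From Coquelicot Require Import Coquelicot.
From Stdlib Require Import FunctionalExtensionality.
Open Scope R_scope.
Set Implicit Arguments. Unset Strict Implicit.
From HB Require Import structures.
HB.instance Definition _ := Monoid.isComLaw.Build R 0 Rplus (fun x y z => esym (Rplus_assoc x y z)) Rplus_comm Rplus_0_l.

Section S.
Variable d : nat.

Lemma vsum_le (F G : 'I_d -> R) : (forall i, F i <= G i) -> vsum F <= vsum G.
Proof. move=> H; rewrite /vsum; elim/big_rec2: _ => [|i y1 y2 _ Hy]; first lra.
have := H i; lra. Qed.

Lemma vsum_ext (F G : 'I_d -> R) : (forall i, F i = G i) -> vsum F = vsum G.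
Proof. move=> H; rewrite /vsum; elim/big_rec2: _ => [|i y1 y2 _ ->]; first lra.
by rewrite H. Qed.

Lemma vsum_add (F G : 'I_d -> R) : vsum F + vsum G = vsum (fun i => F i + G i).
Proof. rewrite /vsum. elim/big_rec3: _ => [|i y1 y2 y3 _ <-]; lra. Qed.

Lemma vsum_sub (F G : 'I_d -> R) : vsum F - vsum G = vsum (fun i => F i - G i).
Proof. rewrite /vsum. elim/big_rec3: _ => [|i y1 y2 y3 _ <-]; lra. Qed.

Lemma vsum_scal (k : R) (F : 'I_d -> R) : vsum (fun i => k * F i) = k * vsum F.
Proof. rewrite /vsum. elim/big_rec2: _ => [|i y1 y2 _ ->]; lra. Qed.

Lemma vsum_ge0 (F : 'I_d -> R) : (forall i, 0 <= F i) -> 0 <= vsum F.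
Proof. move=> H; rewrite /vsum; elim/big_rec: _ => [|i y _ Hy]; first lra.
have := H i; lra. Qed.

Definition clamp (t : R) := Rmax 0 (Rmin 1 t).
Lemma clamp_in t : 0 <= clamp t <= 1.
Proof. rewrite /clamp /Rmax /Rmin; repeat case: Rle_dec; lra. Qed.
Lemma clamp_id t : 0 <= t <= 1 -> clamp t = t.
Proof. rewrite /clamp /Rmax /Rmin; repeat case: Rle_dec; lra. Qed.
Lemma clamp_lip t t' : Rabs (clamp t' - clamp t) <= Rabs (t' - t).
Proof. rewrite /clamp /Rmax /Rmin; repeat case: Rle_dec; rewrite /Rabs; repeat case: Rcase_abs; lra. Qed.

Definition seg (a b : vec d) (t : R) : vec d := fun i => a i + t * (b i - a i).

Lemma seg_in a b t : inX a -> inX b -> 0 <= t <= 1 -> inX (seg a b t).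
Proof. move=> Ha Hb Ht i; rewrite /seg; have := Ha i; have := Hb i; nra. Qed.

Lemma vsub_seg a b t t' : vsub (seg a b t') (seg a b t) = fun i => (t' - t) * vsub b a i.
Proof. apply: functional_extensionality => i; rewrite /vsub /seg; ring. Qed.

Lemma dot_scal_r (u v : vec d) k : dot u (fun i => k * v i) = k * dot u v.
Proof. rewrite /dot -vsum_scal; apply: vsum_ext => i; ring. Qed.

Lemma dot_ge0 (v : vec d) : 0 <= dot v v.
Proof. apply: vsum_ge0 => i; nra. Qed.

Lemma dist_seg a b t t' : dist1 (seg a b t) (seg a b t') = Rabs (t' - t) * vnorm (vsub b a).
Proof.
rewrite /dist1 vsub_seg /vnorm.
have -> : dot (fun i => (t' - t) * vsub b a i) (fun i => (t' - t) * vsub b a i)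
   = ((t'-t)*(t'-t)) * dot (vsub b a) (vsub b a).
  rewrite /dot -vsum_scal; apply: vsum_ext => i; ring.
rewrite sqrt_mult; [|apply Rle_0_sqr|apply dot_ge0].
by rewrite -[(t'-t)*(t'-t)]/(Rsqr (t'-t)) sqrt_Rsqr_abs.
Qed.

Lemma vnorm_ge0 (v : vec d) : 0 <= vnorm v.
Proof. apply sqrt_pos. Qed.

Lemma seg_est (phi : vec d -> R) psi (a b : vec d) t : has_grad1 phi psi -> inX a -> inX b -> 0 <= t <= 1 ->
  forall eps, 0 < eps -> exists delta, 0 < delta /\ forall t', 0 <= t' <= 1 ->
   Rabs (t' - t) * vnorm (vsub b a) < delta ->
   Rabs (phi (seg a b t') - phi (seg a b t) - (t' - t) * dot (psi (seg a b t)) (vsub b a))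
     <= eps * (Rabs (t' - t) * vnorm (vsub b a)).
Proof.
move=> Hg Ha Hb Ht eps He.
have [delta [Hd H]] := Hg _ (seg_in Ha Hb Ht) eps He.
exists delta; split => // t' Ht' Hlt.
have := H _ (seg_in Ha Hb Ht'); rewrite dist_seg vsub_seg dot_scal_r; apply; by [].
Qed.
Lemma mvt_seg (phi : vec d -> R) psi (a b : vec d) : has_grad1 phi psi -> inX a -> inX b ->
  exists t, 0 <= t <= 1 /\ phi b - phi a = dot (psi (seg a b t)) (vsub b a).
Proof.
move=> Hg Ha Hb.
set N := vnorm (vsub b a).
have HN : 0 <= N by apply vnorm_ge0.
set h := fun t => phi (seg a b (clamp t)).
set df := fun t => dot (psi (seg a b (clamp t))) (vsub b a).
have := @MVT_gen h 0 1 df.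
rewrite /Rmin /Rmax; case: Rle_dec => [_|]; last lra.
case.
- move=> t Ht; apply is_derive_Reals => eps He.
  have Ht' : 0 <= t <= 1 by lra.
  have [delta [Hd H]] := seg_est Hg Ha Hb Ht' (Rdiv_lt_0_compat _ _ He (ltac:(lra) : 0 < N + 1)).
  have Hpos : 0 < Rmin (delta / (N+1)) (Rmin t (1 - t)).
    apply Rmin_pos; first by apply Rdiv_lt_0_compat; lra.
    apply Rmin_pos; lra.
  exists (mkposreal _ Hpos) => hh Hh0 Hhd; rewrite /= in Hhd.
  have Hm1 := Rmin_l (delta / (N+1)) (Rmin t (1 - t)).
  have Hm2 := Rmin_r (delta / (N+1)) (Rmin t (1 - t)).
  have Hm3 := Rmin_l t (1 - t).
  have Hm4 := Rmin_r t (1 - t).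
  have Hab : Rabs hh < t /\ Rabs hh < 1 - t by lra.
  have Hth : 0 <= t + hh <= 1.
    move: Hab; rewrite /Rabs; case: Rcase_abs; lra.
  rewrite /h /df !clamp_id //.
  have Hah : 0 < Rabs hh by apply Rabs_pos_lt.
  have Hlt : Rabs (t + hh - t) * N < delta.
    replace (t + hh - t) with hh by ring.
    have : Rabs hh * (N + 1) < delta.
      have := Rmult_lt_compat_r (N+1) _ _ (ltac:(lra) : 0 < N + 1) (Rlt_le_trans _ _ _ Hhd Hm1).
      by rewrite /Rdiv Rmult_assoc Rinv_l ?Rmult_1_r; lra.
    nra.
  have := H _ Hth Hlt; replace (t + hh - t) with hh by ring.
  set A := phi (seg a b (t + hh)) - phi (seg a b t).
  set B := dot (psi (seg a b t)) (vsub b a).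
  move=> HA.
  have -> : A / hh - B = (A - hh * B) / hh by field; lra.
  rewrite Rabs_div; last lra.
  apply (Rmult_lt_reg_r (Rabs hh)) => //.
  rewrite /Rdiv Rmult_assoc Rinv_l ?Rmult_1_r; last lra.
  have : eps / (N + 1) * N < eps.
    apply (Rmult_lt_reg_r (N+1)); first lra.
    rewrite /Rdiv; have -> : eps * / (N + 1) * N * (N + 1) = eps * N * ((N+1) * / (N+1)) by ring.
    rewrite Rinv_r; lra.
  move=> H1; rewrite -/N in HA.
  have H2 : eps / (N + 1) * (Rabs hh * N) < eps * Rabs hh by nra.
  lra.
- move=> t Ht eps He.
  have [delta [Hd H]] := seg_est Hg Ha Hb Ht (ltac:(lra) : 0 < 1).
  set K := Rabs (dot (psi (seg a b t)) (vsub b a)) + N.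
  have HK : 0 <= K by rewrite /K; have := Rabs_pos (dot (psi (seg a b t)) (vsub b a)); lra.
  have Hpos : 0 < Rmin (delta / (N+1)) (eps / (K + 1)).
    apply Rmin_pos; apply Rdiv_lt_0_compat; lra.
  exists (Rmin (delta / (N+1)) (eps / (K + 1))); split => // t' [_ Ht'].
  rewrite /= /R_dist in Ht' *.
  have Hm1 := Rmin_l (delta / (N+1)) (eps / (K + 1)).
  have Hm2 := Rmin_r (delta / (N+1)) (eps / (K + 1)).
  have Hc := clamp_lip t t'. rewrite (clamp_id Ht) in Hc.
  rewrite /h (clamp_id Ht).
  set s := clamp t'.
  have Hs : 0 <= s <= 1 := clamp_in t'.
  have Hsl : Rabs (s - t) < Rmin (delta / (N+1)) (eps / (K + 1)) by rewrite /s; lra.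
  have E1 : Rabs (s - t) * (N + 1) < delta.
    have := Rmult_lt_compat_r (N+1) _ _ (ltac:(lra) : 0 < N + 1) (Rlt_le_trans _ _ _ Hsl Hm1).
    by rewrite /Rdiv Rmult_assoc Rinv_l ?Rmult_1_r; lra.
  have E2 : Rabs (s - t) * (K + 1) < eps.
    have := Rmult_lt_compat_r (K+1) _ _ (ltac:(lra) : 0 < K + 1) (Rlt_le_trans _ _ _ Hsl Hm2).
    by rewrite /Rdiv Rmult_assoc Rinv_l ?Rmult_1_r; lra.
  have Hlt : Rabs (s - t) * N < delta by have := Rabs_pos (s - t); nra.
  have := H _ Hs Hlt.
  set A := phi (seg a b s) - phi (seg a b t).
  set B := dot (psi (seg a b t)) (vsub b a).
  move=> HA.
  have : Rabs A <= Rabs (s - t) * K.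
    have := Rabs_triang (A - (s - t) * B) ((s - t) * B).
    rewrite Rabs_mult; replace (A - (s - t) * B + (s - t) * B) with A by ring.
    rewrite -/N in HA; have HK' : K = Rabs B + N by [].
    rewrite HK'; move=> H3; nra.
  have := Rabs_pos (s - t). nra.
- move=> c [Hc E]; exists (clamp c); split; first by apply clamp_in.
  have S1 : seg a b 1 = b by apply: functional_extensionality => i; rewrite /seg; ring.
  have S0 : seg a b 0 = a by apply: functional_extensionality => i; rewrite /seg; ring.
  rewrite /h /df (@clamp_id 1) ?(@clamp_id 0) ?S1 ?S0 in E; try lra;
  by rewrite E; ring.
Qed.
Lemma lb_grad (phi : vec d -> R) psi (a b : vec d) : has_grad1 phi psi ->
  (forall u v, inX u -> inX v -> vle u v -> vle (psi u) (psi v)) ->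
  inX a -> inX b -> (vle a b \/ vle b a) ->
  phi b - phi a >= dot (psi a) (vsub b a).
Proof.
move=> Hg Hm Ha Hb Hab.
have [t [Ht ->]] := mvt_seg Hg Ha Hb.
apply Rle_ge; apply vsum_le => i.
have Hz := seg_in Ha Hb Ht.
rewrite /vsub.
case: Hab => Hab.
- have Haz : vle a (seg a b t) by move=> j; rewrite /seg; have := Hab j; nra.
  have := Hm _ _ Ha Hz Haz i; have := Hab i; nra.
- have Haz : vle (seg a b t) a by move=> j; rewrite /seg; have := Hab j; nra.
  have := Hm _ _ Hz Ha Haz i; have := Hab i; nra.
Qed.
End S.

Lemma key d Dd f g F G e (a b : vec d) : vector_admissible Dd f g F G -> inEps e ->
  inX a -> inX b -> (vle a b \/ vle b a) ->
  potential Dd g F G a e - potential Dd g F G b e >=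
  vsum (fun i => Dd i * (g b i - g a i) * (f (g a) e i - b i)).
Proof.
move=> HA He Ha Hb Hab.
have Hga := g_maps HA Ha. have Hgb := g_maps HA Hb.
have HG : G b - G a >= dot (fun i => g a i * Dd i) (vsub b a).
  apply: (lb_grad (psi := fun x i => g x i * Dd i)) => //.
  - exact: G_grad HA.
  - move=> u v Hu Hv Huv i; have := D_pos HA i; have := g_mono HA Hu Hv Huv i; nra.
have HF : F (g b) e - F (g a) e >= dot (fun i => f (g a) e i * Dd i) (vsub (g b) (g a)).
  apply: (lb_grad (phi := fun x => F x e) (psi := fun x i => f x e i * Dd i)) => //.
  - exact: F_grad HA e He.
  - move=> u v Hu Hv Huv i; have := D_pos HA i; have := f_mono HA He Hu Hv Huv i; nra.
  - case: Hab => H; [left; exact (g_mono HA Ha Hb H)|right; exact (g_mono HA Hb Ha H)].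
have E : dot (fun i => g a i * Dd i) a - dot (fun i => g b i * Dd i) b
   + dot (fun i => g a i * Dd i) (vsub b a)
   + dot (fun i => f (g a) e i * Dd i) (vsub (g b) (g a))
   = vsum (fun i => Dd i * (g b i - g a i) * (f (g a) e i - b i)).
  rewrite /dot vsum_sub !vsum_add; apply: vsum_ext => i; rewrite /vsub; ring.
rewrite /potential; lra.
Qed.

Lemma sum_cv0 n (F : 'I_n -> nat -> R) : (forall i, Un_cv (F i) 0) ->
  Un_cv (fun l => \big[Rplus/0]_(i<n) F i l) 0.
Proof.
elim: n F => [|n IH] F H.
- move=> eps He; exists 0%nat => l _; rewrite big_ord0 /R_dist Rminus_0_r Rabs_R0; lra.
- have IH' := IH (fun i => F (widen_ord (leqnSn n) i)) (fun i => H _).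
  have Hc := CV_plus _ _ _ _ IH' (H ord_max).
  have E : forall l, \big[Rplus/0]_(i<n.+1) F i l =
     \big[Rplus/0]_(i<n) F (widen_ord (leqnSn n) i) l + F ord_max l.
    by move=> l; rewrite big_ord_recr.
  move=> eps He; have [N HN] := Hc eps He; exists N => l Hl.
  have := HN l Hl; rewrite Rplus_0_r -E; by [].
Qed.

Lemma cv_le_const (u : nat -> R) l c : (forall n, u n <= c) -> Un_cv u l -> l <= c.
Proof.
move=> Hu Hcv; apply Rnot_lt_le => Hlt.
have [N HN] := Hcv (l - c) (ltac:(lra)).
have := HN N (le_n N); have := Hu N; rewrite /R_dist /Rabs; case: Rcase_abs; lra.
Qed.

Lemma cv_ge_const (u : nat -> R) l c : (forall n, c <= u n) -> Un_cv u l -> c <= l.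
Proof.
move=> Hu Hcv; apply Rnot_lt_le => Hlt.
have [N HN] := Hcv (c - l) (ltac:(lra)).
have := HN N (le_n N); have := Hu N; rewrite /R_dist /Rabs; case: Rcase_abs; lra.
Qed.

Definition cmp d (u v : vec d) := vle u v \/ vle v u.

Lemma finish d Dd f g F G e (x xinf : vec d) : vector_admissible Dd f g F G -> inEps e ->
  inX x -> vlim (rec_iter f g e x) xinf -> inX xinf ->
  (forall l, cmp (rec_iter f g e x l) xinf) ->
  (forall l, cmp (rec_iter f g e x l) (rec_iter f g e x (S l))) ->
  potential Dd g F G x e >= potential Dd g F G xinf e.
Proof.
move=> HA He Hx Hlim Hinf Hc1 Hc2.
set s := rec_iter f g e x in Hlim Hc1 Hc2 *.
have Hs : forall l, s (S l) = f (g (s l)) e by [].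
have HX : forall l, inX (s l).
  elim=> [|l IH] //. rewrite Hs; apply: f_maps HA _ _ (g_maps HA IH) He.
have HU : forall l, potential Dd g F G x e >= potential Dd g F G (s l) e.
  elim=> [|l IH]; first by rewrite /s /rec_iter /=; lra.
  have := key HA He (HX l) (HX (S l)) (Hc2 l).
  have : 0 <= vsum (fun i => Dd i * (g (s (S l)) i - g (s l) i) * (f (g (s l)) e i - s (S l) i)).
    apply: vsum_ge0 => i; rewrite -Hs; have -> : s (S l) i - s (S l) i = 0 by ring. lra.
  lra.
set w := fun l => vsum (fun i => Dd i * Rabs (s (S l) i - xinf i)).
have Hr : forall l, potential Dd g F G (s l) e - potential Dd g F G xinf e >= - w l.
  move=> l; have := key HA He (HX l) Hinf (Hc1 l).
  have : - w l <= vsum (fun i => Dd i * (g xinf i - g (s l) i) * (f (g (s l)) e i - xinf i)).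
    have -> : - w l = vsum (fun i => -1 * (Dd i * Rabs (s (S l) i - xinf i))).
      by rewrite vsum_scal /w; ring.
    apply: vsum_le => i.
    rewrite -Hs.
    have := D_pos HA i; have := g_maps HA Hinf i; have := g_maps HA (HX l) i.
    move=> H1 H2 H3.
    have : 0 <= (g xinf i - g (s l) i) * (s (S l) i - xinf i) + Rabs (s (S l) i - xinf i).
      rewrite /Rabs; case: Rcase_abs => Hsg; nra.
    move=> H4; have := Rmult_le_pos _ _ (Rlt_le _ _ H3) H4; nra.
  lra.
have Hw : Un_cv w 0.
  apply: sum_cv0 => i eps Heps.
  have HD := D_pos HA i.
  have [N HN] := Hlim i (eps / Dd i) (Rdiv_lt_0_compat _ _ Heps HD).
  exists N => n Hn; have := HN (S n) (le_S _ _ Hn).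
  rewrite /R_dist Rminus_0_r Rabs_mult Rabs_Rabsolu (Rabs_right (Dd i)); last lra.
  move=> H1; have := Rmult_lt_compat_l _ _ _ HD H1.
  have -> : Dd i * (eps / Dd i) = eps by field; lra.
  by [].
apply Rnot_lt_ge => Hlt.
have [N HN] := Hw (potential Dd g F G xinf e - potential Dd g F G x e) (ltac:(lra)).
have := HN N (le_n N); have := HU N; have := Hr N.
rewrite /R_dist Rminus_0_r /Rabs; case: Rcase_abs; lra.
Qed.

Theorem lemma4 (d : nat) (Dd : vec d) (f : vec d -> R -> vec d)
    (g : vec d -> vec d) (F : vec d -> R -> R) (G : vec d -> R) :
  vector_admissible Dd f g F G ->
  forall (x : vec d) (e : R), inX x -> inEps e ->
    (vle x (f (g x) e) \/ vle (f (g x) e) x) ->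
    exists xinf : vec d,
      vlim (rec_iter f g e x) xinf /\
      potential Dd g F G x e >= potential Dd g F G xinf e.
Proof.
move=> HA x e Hx He Hc.
set s := rec_iter f g e x.
have HX : forall l, inX (s l).
  elim=> [|l IH] //. exact: (f_maps HA (g_maps HA IH) He).
case: Hc => Hc.
- have Hm : forall l, vle (s l) (s (S l)).
    elim=> [|l IH] //.
    exact (f_mono HA He (g_maps HA (HX l)) (g_maps HA (HX (S l))) (g_mono HA (HX l) (HX (S l)) IH)).
  have Hgr : forall i, Un_growing (fun n => s n i) by move=> i n; apply Hm.
  have Hub : forall i, has_ub (fun n => s n i).
    move=> i; exists 1 => y [n ->]; exact: (proj2 (HX n i)).
  set xinf := fun i => proj1_sig (growing_cv _ (Hgr i) (Hub i)).
  have Hlim : vlim s xinf by move=> i; exact: (proj2_sig (growing_cv _ (Hgr i) (Hub i))).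
  have Hle : forall l, vle (s l) xinf by move=> l i; apply: growing_ineq _ _ (Hgr i) (Hlim i) l.
  have Hinf : inX xinf.
    move=> i; split.
    + have := Hle 0%nat i; have := HX 0%nat i; lra.
    + apply: (cv_le_const _ (Hlim i)) => n; exact: (proj2 (HX n i)).
  exists xinf; split => //.
  apply: (finish HA He Hx Hlim Hinf) => l; left; [apply Hle|apply Hm].
- have Hm : forall l, vle (s (S l)) (s l).
    elim=> [|l IH] //.
    exact (f_mono HA He (g_maps HA (HX (S l))) (g_maps HA (HX l)) (g_mono HA (HX (S l)) (HX l) IH)).
  have Hgr : forall i, Un_decreasing (fun n => s n i) by move=> i n; apply Hm.
  have Hub : forall i, has_lb (fun n => s n i).
    move=> i; exists 0 => y [n ->]; rewrite /opp_seq; have := proj1 (HX n i); lra.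
  set xinf := fun i => proj1_sig (decreasing_cv _ (Hgr i) (Hub i)).
  have Hlim : vlim s xinf by move=> i; exact: (proj2_sig (decreasing_cv _ (Hgr i) (Hub i))).
  have Hle : forall l, vle xinf (s l) by move=> l i; apply: decreasing_ineq _ _ (Hgr i) (Hlim i) l.
  have Hinf : inX xinf.
    move=> i; split.
    + apply: (cv_ge_const _ (Hlim i)) => n; exact: (proj1 (HX n i)).
    + have := Hle 0%nat i; have := HX 0%nat i; lra.
  exists xinf; split => //.
  apply: (finish HA He Hx Hlim Hinf) => l; right; [apply Hle|apply Hm].
Qed.
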